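(* For every $[\rho]\in\mathcal{P}_5$ and every $t\in\mathbb{R}$, one has $\Phi^t_{a_1}([\rho])\in\mathcal{P}_5$ and $\Phi^t_{[a_1,b_1]}([\rho])\in\mathcal{P}_5$.
   Context: $S$ closed oriented genus 2, $\pi_1S=\langle a_1,b_1,a_2,b_2 : [a_1,b_1][a_2,b_2]=1\rangle$, $\Gamma=\langle q_1,\dots,q_6: q_i^2=1, q_1\cdots q_6=1\rangle\supset\pi_1S$ via $a_1\mapsto q_3q_2$, $b_1\mapsto q_1q_2$, $a_2\mapsto q_6q_5$, $b_2\mapsto q_4q_5$. $\mathcal{P}_5\subset\chi(S,\mathrm{PSL}_2(\mathbb{R}))$ is the set of conjugacy classes of restrictions to $\pi_1S$ of representations $\bar\rho\colon\Gamma\to\mathrm{PSL}_2(\mathbb{R})$ whose kernel contains $q_5$ and no other $q_i$; for such $\rho$, $\rho(a_1),\rho(b_1),\rho([a_1,b_1])$ are hyperbolic and $\rho(a_2),\rho(b_2)$ are elliptic of angle $\pi$. Let $U$ be the open set of classes with Euler number $\pm1$ for which $\rho(a_1)$ and $\rho([a_1,b_1])$ are hyperbolic; for $x\in\{a_1,[a_1,b_1]\}$, $\ell_x\colon U\to\mathbb{R}_{>0}$ is the translation length of $\rho(x)$ and $\Phi^t_x$ its Hamiltonian flow for the Goldman symplectic form. Concretely, writing $\xi_\rho(t)$, $\zeta_\rho(t)$ for the one-parameter groups of hyperbolic elements with the same axes as $\rho(a_1)$, resp. $\rho([a_1,b_1])$, translating by $t$ (so $\rho(a_1)=\xi_\rho(\ell_{a_1})$,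 $\rho([a_1,b_1])=\zeta_\rho(\ell_{[a_1,b_1]})$), $\Phi^t_{a_1}$ lifts to $a_1\mapsto\rho(a_1)$, $b_1\mapsto\rho(b_1)\xi_\rho(t)^{-1}$, $a_2\mapsto\rho(a_2)$, $b_2\mapsto\rho(b_2)$, and $\Phi^t_{[a_1,b_1]}$ lifts to $a_1\mapsto\rho(a_1)$, $b_1\mapsto\rho(b_1)$, $a_2\mapsto\zeta_\rho(t)\rho(a_2)\zeta_\rho(t)^{-1}$, $b_2\mapsto\zeta_\rho(t)\rho(b_2)\zeta_\rho(t)^{-1}$. *)

(* Defs.v *)
From Stdlib Require Import Reals.
Open Scope R_scope.

(** Elements of PSL_2(R) are represented by matrices of
    determinant 1 (elements of SL_2(R)), two such representing the same
    element of PSL_2(R) iff they are equal up to sign ([peq]). *)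
Record M2 := mkM2 { e11 : R; e12 : R; e21 : R; e22 : R }.

Definition mid : M2 := mkM2 1 0 0 1.
Definition mmul (A B : M2) : M2 :=
  mkM2 (e11 A * e11 B + e12 A * e21 B) (e11 A * e12 B + e12 A * e22 B)
       (e21 A * e11 B + e22 A * e21 B) (e21 A * e12 B + e22 A * e22 B).
Definition madd (A B : M2) : M2 :=
  mkM2 (e11 A + e11 B) (e12 A + e12 B) (e21 A + e21 B) (e22 A + e22 B).
Definition mscale (k : R) (A : M2) : M2 :=
  mkM2 (k * e11 A) (k * e12 A) (k * e21 A) (k * e22 A).
Definition mopp (A : M2) : M2 := mscale (-1) A.
Definition mdet (A : M2) : R := e11 A * e22 A - e12 A * e21 A.
Definition mtr (A : M2) : R := e11 A + e22 A.
(** inverse of a determinant-1 matrix (adjugate) *)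
Definition minv (A : M2) : M2 := mkM2 (e22 A) (- e12 A) (- e21 A) (e11 A).

Definition SL2 (A : M2) : Prop := mdet A = 1.
Definition peq (A B : M2) : Prop := A = B \/ A = mopp B.

Definition comm (A B : M2) : M2 := mmul (mmul A B) (mmul (minv A) (minv B)).

Definition hyperbolic (A : M2) : Prop := SL2 A /\ 2 < Rabs (mtr A).

(** Translation length of a hyperbolic element: |tr A| = 2 cosh(l/2). *)
Definition halftr (A : M2) : R := Rabs (mtr A) / 2.
Definition transl_length (A : M2) : R :=
  2 * ln (halftr A + sqrt (halftr A * halftr A - 1)).

(** The one-parameter group xi_A(t) of hyperbolic elements with the same axis
    (and translation direction) as the hyperbolic element A, translating by t,
    so that xi_A(transl_length A) = A in PSL_2(R).  Writing A0 = sign(tr A) A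
    (the lift of trace 2 cosh(l/2) > 2), A0 = P diag(e^{l/2},e^{-l/2}) P^{-1}
    and xi_A(t) = P diag(e^{t/2},e^{-t/2}) P^{-1}
                = cosh(t/2) I + sinh(t/2)/sinh(l/2) (A0 - cosh(l/2) I). *)
Definition trsign (A : M2) : R := if Rlt_dec (mtr A) 0 then -1 else 1.
Definition oneparam (A : M2) (t : R) : M2 :=
  let c := halftr A in
  let s := sqrt (c * c - 1) in
  madd (mscale (cosh (t / 2)) mid)
       (mscale (sinh (t / 2) / s) (madd (mscale (trsign A) A) (mscale (- c) mid))).

(** Representations of Gamma = <q1..q6 | q_i^2 = 1, q1...q6 = 1> into
    PSL_2(R), given by lifts q 1, ..., q 6 in SL_2(R). *)
Definition GammaRep (q : nat -> M2) : Prop :=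
  (forall i, (1 <= i <= 6)%nat -> SL2 (q i) /\ peq (mmul (q i) (q i)) mid) /\
  peq (mmul (q 1%nat) (mmul (q 2%nat) (mmul (q 3%nat)
        (mmul (q 4%nat) (mmul (q 5%nat) (q 6%nat)))))) mid.

Definition kernel_q5_only (q : nat -> M2) : Prop :=
  peq (q 5%nat) mid /\
  (forall i, (1 <= i <= 6)%nat -> i <> 5%nat -> ~ peq (q i) mid).

(** Representations of pi_1 S = <a1,b1,a2,b2 | [a1,b1][a2,b2] = 1> into
    PSL_2(R), given by (lifts of) the images of the generators. *)
Record SRep := mkSRep { ra1 : M2; rb1 : M2; ra2 : M2; rb2 : M2 }.

Definition restrict (q : nat -> M2) : SRep :=
  mkSRep (mmul (q 3%nat) (q 2%nat)) (mmul (q 1%nat) (q 2%nat))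
         (mmul (q 6%nat) (q 5%nat)) (mmul (q 4%nat) (q 5%nat)).

Definition conjugate (rho rho' : SRep) : Prop :=
  exists g : M2, SL2 g /\
    peq (ra1 rho') (mmul g (mmul (ra1 rho) (minv g))) /\
    peq (rb1 rho') (mmul g (mmul (rb1 rho) (minv g))) /\
    peq (ra2 rho') (mmul g (mmul (ra2 rho) (minv g))) /\
    peq (rb2 rho') (mmul g (mmul (rb2 rho) (minv g))).

Definition inP5 (rho : SRep) : Prop :=
  exists q : nat -> M2, GammaRep q /\ kernel_q5_only q /\ conjugate (restrict q) rho.

(** Lifts of the Hamiltonian flows of l_{a1} and l_{[a1,b1]}. *)
Definition flow_a1 (t : R) (rho : SRep) : SRep :=
  mkSRep (ra1 rho) (mmul (rb1 rho) (minv (oneparam (ra1 rho) t)))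
         (ra2 rho) (rb2 rho).

Definition flow_c1 (t : R) (rho : SRep) : SRep :=
  let z := oneparam (comm (ra1 rho) (rb1 rho)) t in
  mkSRep (ra1 rho) (rb1 rho)
         (mmul z (mmul (ra2 rho) (minv z))) (mmul z (mmul (rb2 rho) (minv z))).

(* Main.v *)
Require Import Defs.
From Stdlib Require Import Reals Nsatz Lra Psatz Lia.
Open Scope R_scope.

Lemma M2eq (A B : M2) : e11 A = e11 B -> e12 A = e12 B -> e21 A = e21 B -> e22 A = e22 B -> A = B.
Proof. destruct A, B; simpl; intros; subst; reflexivity. Qed.

Ltac mdestr := repeat match goal with A : M2 |- _ => destruct A end.
Ltac munf := unfold SL2 in *; unfold mmul, madd, mscale, minv, mopp, mid, mdet, mtr in *; simpl in *.
Ltac meq := mdestr; munf; apply M2eq; simpl; ring.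

Lemma massoc A B C : mmul (mmul A B) C = mmul A (mmul B C). Proof. meq. Qed.
Lemma mid_l A : mmul mid A = A. Proof. meq. Qed.
Lemma mid_r A : mmul A mid = A. Proof. meq. Qed.
Lemma msc_l k A B : mmul (mscale k A) B = mscale k (mmul A B). Proof. meq. Qed.
Lemma msc_r k A B : mmul A (mscale k B) = mscale k (mmul A B). Proof. meq. Qed.
Lemma msc_msc k l A : mscale k (mscale l A) = mscale (k*l) A. Proof. meq. Qed.
Lemma msc_1 A : mscale 1 A = A. Proof. meq. Qed.
Lemma minv_mul A B : minv (mmul A B) = mmul (minv B) (minv A). Proof. meq. Qed.
Lemma minv_msc k A : minv (mscale k A) = mscale k (minv A). Proof. meq. Qed.
Lemma minv_minv A : minv (minv A) = A. Proof. meq. Qed.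
Lemma minv_mid : minv mid = mid. Proof. meq. Qed.
Lemma mul_minv A : mmul A (minv A) = mscale (mdet A) mid. Proof. meq. Qed.
Lemma minv_mul_self A : mmul (minv A) A = mscale (mdet A) mid. Proof. meq. Qed.
Lemma mdet_mul A B : mdet (mmul A B) = mdet A * mdet B. Proof. mdestr; munf; ring. Qed.
Lemma mdet_minv A : mdet (minv A) = mdet A. Proof. mdestr; munf; ring. Qed.
Lemma mdet_msc k A : mdet (mscale k A) = k*k*mdet A. Proof. mdestr; munf; ring. Qed.
Lemma mtr_msc k A : mtr (mscale k A) = k * mtr A. Proof. mdestr; munf; ring. Qed.
Lemma mtr_swap A B : mtr (mmul A B) = mtr (mmul B A). Proof. mdestr; munf; ring. Qed.
Lemma mtr_minv A : mtr (minv A) = mtr A. Proof. mdestr; munf; ring. Qed.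

Lemma mul_minv1 A : SL2 A -> mmul A (minv A) = mid.
Proof. intro H. rewrite mul_minv. unfold SL2 in H. rewrite H, msc_1. reflexivity. Qed.
Lemma minv_mul1 A : SL2 A -> mmul (minv A) A = mid.
Proof. intro H. rewrite minv_mul_self. unfold SL2 in H. rewrite H, msc_1. reflexivity. Qed.
Lemma SL2_mul A B : SL2 A -> SL2 B -> SL2 (mmul A B).
Proof. unfold SL2; intros; rewrite mdet_mul; nra. Qed.
Lemma SL2_minv A : SL2 A -> SL2 (minv A).
Proof. unfold SL2; intros; rewrite mdet_minv; auto. Qed.

Definition sgn (e : R) := e * e = 1.
Lemma peq_sgn A B : peq A B -> exists e, sgn e /\ A = mscale e B.
Proof. intros [H|H]; [exists 1|exists (-1)]; unfold sgn; split; try ring.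
 rewrite msc_1; auto. exact H. Qed.
Lemma sgn_peq A B e : sgn e -> A = mscale e B -> peq A B.
Proof. unfold sgn, peq, mopp; intros He ->.
 assert (e = 1 \/ e = -1) as [->| ->] by nra; [left; apply msc_1|right; reflexivity]. Qed.
Lemma sgn_mul e f : sgn e -> sgn f -> sgn (e*f).
Proof. unfold sgn; intros; nra. Qed.
Lemma sgn_m1 : sgn (-1). Proof. unfold sgn; ring. Qed.
Lemma sgn_1 : sgn 1. Proof. unfold sgn; ring. Qed.

Definition inv (q : M2) := SL2 q /\ mtr q = 0.

Lemma inv_of q : SL2 q -> peq (mmul q q) mid -> ~ peq q mid -> inv q.
Proof.
 intros H1 H2 H3. split; auto. destruct (peq_sgn _ _ H2) as [e [He Hq]].
 destruct q as [a b c d]. unfold SL2, mdet, mtr, sgn in *; simpl in *.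
 unfold mmul, mscale, mid in Hq; simpl in Hq. injection Hq; intros E4 E3 E2 E1.
 destruct (Req_dec (a+d) 0) as [|Hs]; auto. exfalso.
 assert (b = 0). { apply (Rmult_eq_reg_l (a+d)); auto. nra. }
 assert (c = 0). { apply (Rmult_eq_reg_l (a+d)); auto. nra. }
 subst. assert (a = d) by nra. subst.
 apply H3. apply (sgn_peq _ _ d). unfold sgn; nra. unfold mscale, mid; apply M2eq; simpl; ring.
Qed.

Lemma inv_sq q : inv q -> mmul q q = mscale (-1) mid.
Proof. destruct q; unfold inv; munf; intros [H1 H2]. apply M2eq; simpl; nsatz. Qed.
Lemma inv_minv q : inv q -> minv q = mscale (-1) q.
Proof. destruct q; unfold inv; munf; intros [H1 H2]. apply M2eq; simpl; nsatz. Qed.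
Lemma inv_notid q : inv q -> ~ peq q mid.
Proof. intros [H1 H2] H. destruct (peq_sgn _ _ H) as [e [He ->]].
 rewrite mtr_msc in H2. unfold mtr, mid in H2; simpl in H2. unfold sgn in He. nra. Qed.

Lemma sq0 x y : 0 = - x^2 - y^2 -> x = 0 /\ y = 0.
Proof. intro H. pose proof (pow2_ge_0 x); pose proof (pow2_ge_0 y).
 assert (x^2 = 0) by lra; assert (y^2 = 0) by lra. split; nra. Qed.

Lemma rcs p r : inv p -> inv r -> 2 <= Rabs (mtr (mmul p r)) /\
   (Rabs (mtr (mmul p r)) <= 2 -> peq p r).
Proof.
 destruct p as [a b c d], r as [a' b' c' d']; unfold inv; munf.
 intros [H1 H2] [H3 H4].
 assert (d = -a) by lra. assert (d' = -a') by lra. subst.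
 assert (K1 : b*c = -1 - a*a) by lra. assert (K2 : b'*c' = -1-a'*a') by lra.
 assert (E1 : (a*a' + b*c' + (c*b' + - a * - a')+2)*(b*b') = -((b-b')^2) - (b*a' - a*b')^2).
 { replace ((a*a' + b*c' + (c*b' + - a * - a')+2)*(b*b')) with (2*a*a'*b*b' + b*b*(b'*c') + b'*b'*(b*c) + 2*b*b') by ring.
   rewrite K1, K2. ring. }
 assert (E2 : (a*a' + b*c' + (c*b' + - a * - a')-2)*(b*b') = -((b+b')^2) - (b*a' - a*b')^2).
 { replace ((a*a' + b*c' + (c*b' + - a * - a')-2)*(b*b')) with (2*a*a'*b*b' + b*b*(b'*c') + b'*b'*(b*c) - 2*b*b') by ring.
   rewrite K1, K2. ring. }
 set (t := a*a' + b*c' + (c*b' + - a * - a')) in *.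
 assert (Hb : b <> 0) by (intro; subst; nra).
 assert (Hb' : b' <> 0) by (intro; subst; nra).
 assert (bb : b*b' <> 0) by (apply Rmult_integral_contrapositive; auto).
 assert (F1 : (t+2)*(b*b') <= 0) by (rewrite E1; pose proof (pow2_ge_0 (b-b')); pose proof (pow2_ge_0 (b*a'-a*b')); lra).
 assert (F2 : (t-2)*(b*b') <= 0) by (rewrite E2; pose proof (pow2_ge_0 (b+b')); pose proof (pow2_ge_0 (b*a'-a*b')); lra).
 destruct (Rlt_or_le 0 (b*b')) as [P|P].
 - assert (t <= -2).
   { destruct (Rle_or_lt t (-2)); auto. exfalso. assert (0 < (t+2)*(b*b')) by (apply Rmult_lt_0_compat; lra). lra. }
   rewrite Rabs_left by lra. split; [lra|]. intro.
   assert (t = -2) by lra. rewrite H5 in E1. replace ((-2+2)*(b*b')) with 0 in E1 by ring.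
   destruct (sq0 _ _ E1) as [Q1 Q2].
   assert (b = b') by lra. subst b'.
   assert (a = a') by (apply (Rmult_eq_reg_l b); auto; lra). subst a'. assert (c = c') by (apply (Rmult_eq_reg_l b); auto; lra). subst.
   left; reflexivity.
 - assert (P' : b*b' < 0) by (destruct P; auto; contradiction).
   assert (t >= 2).
   { destruct (Rle_or_lt 2 t); [lra|]. exfalso. assert (0 < (t-2)*(b*b')) by nra. lra. }
   rewrite Rabs_right by lra. split; [lra|]. intro.
   assert (t = 2) by lra. rewrite H5 in E2. replace ((2-2)*(b*b')) with 0 in E2 by ring.
   destruct (sq0 _ _ E2) as [Q1 Q2].
   assert (b = -b') by lra. subst b.
   assert (a = -a') by (apply (Rmult_eq_reg_l b'); auto; lra). subst a. assert (c = -c') by (apply (Rmult_eq_reg_l b'); auto; lra). subst.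
   right. unfold mopp, mscale; apply M2eq; simpl; ring.
Qed.

Definition L (x y : R) (B : M2) := madd (mscale x mid) (mscale y B).

Lemma op_form B t : oneparam B t =
  L (cosh (t/2) - sinh (t/2) / sqrt (halftr B * halftr B - 1) * halftr B)
    (sinh (t/2) / sqrt (halftr B * halftr B - 1) * trsign B) B.
Proof. unfold oneparam, L. generalize (halftr B) (trsign B) (sqrt (halftr B * halftr B - 1)).
 intros. destruct B; munf; apply M2eq; simpl; ring. Qed.

Lemma det_L x y B : mdet (L x y B) = x*x + x*y*mtr B + y*y*mdet B.
Proof. unfold L; destruct B; munf; ring. Qed.

Lemma cosh_sinh x : cosh x * cosh x - sinh x * sinh x = 1.
Proof. unfold cosh, sinh. assert (exp x * exp (-x) = 1).
 { rewrite <- exp_plus. replace (x + - x) with 0 by ring. apply exp_0. }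
 field_simplify. nra. Qed.

Lemma op_det B t : SL2 B -> 2 < Rabs (mtr B) -> SL2 (oneparam B t).
Proof.
 intros H1 H2. unfold SL2 in *. rewrite op_form, det_L, H1.
 assert (Hc : 1 < halftr B) by (unfold halftr; lra).
 assert (Hs : sqrt (halftr B * halftr B - 1) * sqrt (halftr B * halftr B - 1) = halftr B * halftr B - 1)
   by (apply sqrt_sqrt; nra).
 assert (Hs0 : 0 < sqrt (halftr B * halftr B - 1)) by (apply sqrt_lt_R0; nra).
 assert (Hsg : trsign B * mtr B = 2 * halftr B /\ trsign B * trsign B = 1).
 { unfold trsign, halftr. destruct (Rlt_dec (mtr B) 0).
   - rewrite Rabs_left by lra. split; field.
   - rewrite Rabs_right by lra. split; field. }
 destruct Hsg as [E1 E2].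
 set (c := halftr B) in *. set (s := sqrt (c*c - 1)) in *. set (sg := trsign B) in *.
 pose proof (cosh_sinh (t/2)).
 set (ch := cosh (t/2)) in *. set (sh := sinh (t/2)) in *.
 set (k := sh / s).
 assert (k*k*(c*c-1) = sh*sh) by (unfold k; rewrite <- Hs; field; lra).
 replace ((ch - k * c) * (ch - k * c) + (ch - k * c) * (k * sg) * mtr B + k * sg * (k * sg) * 1)
   with (ch*ch - 2*ch*k*c + k*k*c*c + (ch - k*c)*k*(sg * mtr B) + k*k*(sg*sg)) by ring.
 rewrite E1, E2. nra.
Qed.

Lemma L_comm_minv x y B p : mmul (minv B) p = mmul p B -> mmul (minv (L x y B)) p = mmul p (L x y B).
Proof. unfold L; destruct B, p; munf; intro H; injection H; intros; apply M2eq; simpl; nsatz. Qed.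
Lemma L_comm x y B p : mmul B p = mmul p B -> mmul (L x y B) p = mmul p (L x y B).
Proof. unfold L; destruct B, p; munf; intro H; injection H; intros; apply M2eq; simpl; nsatz. Qed.

Definition cj g A := mmul g (mmul A (minv g)).

Lemma cj_mul g A B : SL2 g -> cj g (mmul A B) = mmul (cj g A) (cj g B).
Proof. unfold cj; intro H. rewrite !massoc. rewrite <- (massoc (minv g) g), minv_mul1, mid_l by auto. reflexivity. Qed.
Lemma cj_msc g k A : cj g (mscale k A) = mscale k (cj g A).
Proof. unfold cj; rewrite msc_l, msc_r; reflexivity. Qed.
Lemma cj_mid g : SL2 g -> cj g mid = mid.
Proof. unfold cj; intro; rewrite mid_l, mul_minv1; auto. Qed.
Lemma cj_SL2 g A : SL2 g -> SL2 A -> SL2 (cj g A).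
Proof. intros; unfold cj; repeat apply SL2_mul; auto; apply SL2_minv; auto. Qed.
Lemma cj_back g A : SL2 g -> cj (minv g) (cj g A) = A.
Proof. unfold cj; intro H. rewrite minv_minv, !massoc, minv_mul1, mid_r, <- massoc, minv_mul1, mid_l by auto.
 reflexivity. Qed.
Lemma peq_cj g A B : peq A B -> peq (cj g A) (cj g B).
Proof. intros [->| ->]; [left|right]; auto. unfold mopp; apply cj_msc. Qed.
Lemma peq_cj_mid g A : SL2 g -> peq A mid -> peq (cj g A) mid.
Proof. intros. rewrite <- (cj_mid g) by auto. apply peq_cj; auto. Qed.
Lemma notpeq_cj g A : SL2 g -> ~ peq A mid -> ~ peq (cj g A) mid.
Proof. intros H1 H2 H3. apply H2. rewrite <- (cj_back g A), <- (cj_mid (minv g)) by (auto; apply SL2_minv; auto).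
 apply peq_cj; auto. Qed.
Lemma mid_SL2 : SL2 mid. Proof. unfold SL2, mdet, mid; simpl; ring. Qed.

Definition qconj (g : M2) (q : nat -> M2) := fun i => cj g (q i).

Lemma prod_cj g (q : nat -> M2) : SL2 g ->
  mmul (cj g (q 1%nat)) (mmul (cj g (q 2%nat)) (mmul (cj g (q 3%nat))
        (mmul (cj g (q 4%nat)) (mmul (cj g (q 5%nat)) (cj g (q 6%nat))))))
  = cj g (mmul (q 1%nat) (mmul (q 2%nat) (mmul (q 3%nat)
        (mmul (q 4%nat) (mmul (q 5%nat) (q 6%nat)))))).
Proof. intro H. rewrite !(cj_mul g) by auto. reflexivity. Qed.

Lemma GammaRep_cj g q : SL2 g -> GammaRep q -> GammaRep (qconj g q).
Proof. intros Hg [H1 H2]. split.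
 - intros i Hi. destruct (H1 i Hi) as [Ha Hb]. unfold qconj. split. apply cj_SL2; auto.
   rewrite <- cj_mul by auto. apply peq_cj_mid; auto.
 - unfold qconj. rewrite prod_cj by auto. apply peq_cj_mid; auto.
Qed.

Lemma kernel_cj g q : SL2 g -> kernel_q5_only q -> kernel_q5_only (qconj g q).
Proof. intros Hg [H1 H2]. unfold qconj; split. apply peq_cj_mid; auto.
 intros i Hi Hn. apply notpeq_cj; auto. Qed.

Definition close (q : nat -> M2) (rho : SRep) :=
  peq (ra1 rho) (mmul (q 3%nat) (q 2%nat)) /\ peq (rb1 rho) (mmul (q 1%nat) (q 2%nat)) /\
  peq (ra2 rho) (mmul (q 6%nat) (q 5%nat)) /\ peq (rb2 rho) (mmul (q 4%nat) (q 5%nat)).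

Lemma close_inP5 q rho : GammaRep q -> kernel_q5_only q -> close q rho -> inP5 rho.
Proof. intros H1 H2 H3. exists q. split; auto. split; auto. exists mid. split. apply mid_SL2.
 unfold restrict; simpl. rewrite minv_mid, !mid_l, !mid_r. exact H3. Qed.

Lemma inP5_close rho : inP5 rho -> exists q, GammaRep q /\ kernel_q5_only q /\ close q rho.
Proof. intros [q [H1 [H2 [g [Hg [E1 [E2 [E3 E4]]]]]]]]. exists (qconj g q).
 split. apply GammaRep_cj; auto. split. apply kernel_cj; auto.
 unfold close, qconj; simpl in *. fold (cj g (mmul (q 3%nat) (q 2%nat))) in E1.
 fold (cj g (mmul (q 1%nat) (q 2%nat))) in E2.
 fold (cj g (mmul (q 6%nat) (q 5%nat))) in E3. fold (cj g (mmul (q 4%nat) (q 5%nat))) in E4.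
 rewrite !cj_mul in * by auto. auto. Qed.

Ltac mnorm := repeat progress (rewrite ?minv_mul, ?minv_msc, ?minv_minv, ?minv_mid, ?massoc, ?msc_l, ?msc_r, ?msc_msc, ?mid_l, ?mid_r).

Lemma inv_sq' q X : inv q -> mmul q (mmul q X) = mscale (-1) X.
Proof. intro H. rewrite <- massoc, inv_sq, msc_l, mid_l by auto; reflexivity. Qed.

Lemma msc_eq a b X : a = b -> mscale a X = mscale b X.
Proof. intros ->; reflexivity. Qed.

Lemma facts q : GammaRep q -> kernel_q5_only q ->
  inv (q 1%nat) /\ inv (q 2%nat) /\ inv (q 3%nat) /\ inv (q 4%nat) /\ inv (q 6%nat) /\
  SL2 (q 5%nat) /\ (exists e5, sgn e5 /\ q 5%nat = mscale e5 mid) /\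
  (exists e, sgn e /\ mmul (q 1%nat) (mmul (q 2%nat) (mmul (q 3%nat)
        (mmul (q 4%nat) (mmul (q 5%nat) (q 6%nat))))) = mscale e mid).
Proof.
 intros [H1 H2] [K1 K2].
 assert (I : forall i, (1 <= i <= 6)%nat -> i <> 5%nat -> inv (q i)).
 { intros i Hi Hn. destruct (H1 i Hi). apply inv_of; auto. }
 repeat split; try (apply I; lia).
 - apply (H1 5%nat); lia.
 - apply peq_sgn; auto.
 - apply peq_sgn; auto.
Qed.

Lemma msc_swap k A B : sgn k -> A = mscale k B -> B = mscale k A.
Proof. unfold sgn; intros H ->. rewrite msc_msc, H, msc_1. reflexivity. Qed.

Lemma mtr_mid : mtr mid = 2. Proof. unfold mtr, mid; simpl; ring. Qed.

Lemma sq_notid q : mmul q q = mscale (-1) mid -> ~ peq q mid.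
Proof. intros H1 H2. destruct (peq_sgn _ _ H2) as [s [Hs ->]]. revert H1.
 rewrite msc_l, msc_r, msc_msc, mid_l. intro H. apply (f_equal e11) in H. unfold mscale, mid in H; simpl in H.
 unfold sgn in Hs. lra. Qed.

Ltac qnorm I1 I2 I3 I4 I6 tac := repeat progress (mnorm; rewrite ?(inv_sq' _ _ I1), ?(inv_sq' _ _ I2), ?(inv_sq' _ _ I3),
   ?(inv_sq' _ _ I4), ?(inv_sq' _ _ I6), ?(inv_sq _ I1), ?(inv_sq _ I2), ?(inv_sq _ I3),
   ?(inv_sq _ I4), ?(inv_sq _ I6), ?(inv_minv _ I1), ?(inv_minv _ I2), ?(inv_minv _ I3),
   ?(inv_minv _ I4), ?(inv_minv _ I6); tac).

Ltac qn I1 I2 I3 I4 I6 R2 R3 RX0 RX := qnorm I1 I2 I3 I4 I6 ltac:(rewrite ?R2, ?R3, ?RX0, ?RX).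

Ltac sgns := repeat (apply sgn_mul || apply sgn_m1 || apply sgn_1 || assumption).

Lemma hyp_of p r : inv p -> inv r -> ~ peq p r -> 2 < Rabs (mtr (mmul p r)).
Proof. intros H1 H2 H3. destruct (rcs p r H1 H2) as [A B].
 destruct (Rlt_or_le 2 (Rabs (mtr (mmul p r)))); auto. exfalso; auto. Qed.

Lemma tr_nz p r : inv p -> inv r -> mtr (mmul p r) <> 0.
Proof. intros H1 H2 H. destruct (rcs p r H1 H2) as [A _]. rewrite H, Rabs_R0 in A. lra. Qed.

Lemma tr0_of k X Y : sgn k -> mscale k X = Y -> mtr Y = 0 -> mtr X = 0.
Proof. intros Hk <- H. rewrite mtr_msc in H. unfold sgn in Hk.
 destruct (Rmult_integral _ _ H); auto. subst; lra. Qed.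

Lemma not_q3q2 (q : nat -> M2) (I1 : inv (q 1%nat)) (I2 : inv (q 2%nat)) (I3 : inv (q 3%nat)) (I4 : inv (q 4%nat)) (I6 : inv (q 6%nat))
 (e5 e : R) (S5 : sgn e5) (Se : sgn e) (Q5 : q 5%nat = mscale e5 mid)
 (Hrel : mmul (q 1%nat) (mmul (q 2%nat) (mmul (q 3%nat) (mmul (q 4%nat) (mmul (q 5%nat) (q 6%nat))))) = mscale e mid) : ~ peq (q 3%nat) (q 2%nat).
Proof. intro H. destruct (peq_sgn _ _ H) as [s [Hs E3]].
 pose proof Hrel as Hr. rewrite E3, Q5 in Hr. revert Hr; qnorm I1 I2 I3 I4 I6 idtac; intro Hr.
 apply (f_equal (fun M => mmul M (q 6%nat))) in Hr. revert Hr; qnorm I1 I2 I3 I4 I6 idtac; intro Hr.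
 apply tr0_of in Hr.
 - exact (tr_nz _ _ I1 I4 Hr).
 - sgns.
 - rewrite mtr_msc, (proj2 I6). ring.
Qed.

Lemma not_q4q6 (q : nat -> M2) (I1 : inv (q 1%nat)) (I2 : inv (q 2%nat)) (I3 : inv (q 3%nat)) (I4 : inv (q 4%nat)) (I6 : inv (q 6%nat))
 (e5 e : R) (S5 : sgn e5) (Se : sgn e) (Q5 : q 5%nat = mscale e5 mid)
 (Hrel : mmul (q 1%nat) (mmul (q 2%nat) (mmul (q 3%nat) (mmul (q 4%nat) (mmul (q 5%nat) (q 6%nat))))) = mscale e mid) : ~ peq (q 4%nat) (q 6%nat).
Proof. intro H. destruct (peq_sgn _ _ H) as [s [Hs E4]].
 pose proof Hrel as Hr. rewrite E4, Q5 in Hr. revert Hr; qnorm I1 I2 I3 I4 I6 idtac; intro Hr.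
 apply (f_equal (fun M => mmul (q 1%nat) M)) in Hr. revert Hr; qnorm I1 I2 I3 I4 I6 idtac; intro Hr.
 apply tr0_of in Hr.
 - exact (tr_nz _ _ I2 I3 Hr).
 - sgns.
 - rewrite mtr_msc, (proj2 I1). ring.
Qed.

Lemma W_rel (q : nat -> M2) (I1 : inv (q 1%nat)) (I2 : inv (q 2%nat)) (I3 : inv (q 3%nat)) (I4 : inv (q 4%nat)) (I6 : inv (q 6%nat))
 (e5 e : R) (S5 : sgn e5) (Se : sgn e) (Q5 : q 5%nat = mscale e5 mid)
 (Hrel : mmul (q 1%nat) (mmul (q 2%nat) (mmul (q 3%nat) (mmul (q 4%nat) (mmul (q 5%nat) (q 6%nat))))) = mscale e mid) : exists k, sgn k /\ mmul (q 3%nat) (mmul (q 2%nat) (q 1%nat)) = mscale k (mmul (q 4%nat) (q 6%nat)).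
Proof.
 pose proof Hrel as Hr. rewrite Q5 in Hr.
 apply (f_equal (fun M => mmul (mmul (q 3%nat) (mmul (q 2%nat) (q 1%nat))) M)) in Hr. revert Hr; qnorm I1 I2 I3 I4 I6 idtac; intro Hr.
 apply msc_swap in Hr; [|sgns]. rewrite msc_msc in Hr.
 eexists; split; [|exact Hr]. sgns.
Qed.



Lemma SL2_msc k A : sgn k -> SL2 A -> SL2 (mscale k A).
Proof. unfold SL2, sgn; intros; rewrite mdet_msc; nra. Qed.
Lemma hyp_msc k A : sgn k -> 2 < Rabs (mtr A) -> 2 < Rabs (mtr (mscale k A)).
Proof. unfold sgn; intros. rewrite mtr_msc, Rabs_mult.
 assert (Rabs k = 1). { destruct (Rcase_abs k); [rewrite Rabs_left|rewrite Rabs_right]; nra. }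
 rewrite H1; lra. Qed.

Lemma flow_a1_ok q rho t : GammaRep q -> kernel_q5_only q -> close q rho -> inP5 (flow_a1 t rho).
Proof.
 intros HG HK HC. pose proof (facts q HG HK) as [I1 [I2 [I3 [I4 [I6 [SL5 [[e5 [S5 Q5]] [e [Se Hrel]]]]]]]]].
 destruct HC as [C1 [C2 [C3 C4]]].
 destruct (peq_sgn _ _ C1) as [e1 [S1 E1]]. destruct (peq_sgn _ _ C2) as [e2 [S2 E2]].
 assert (HB : SL2 (ra1 rho)) by (rewrite E1; apply SL2_msc; auto; apply SL2_mul; [apply (proj1 I3)|apply (proj1 I2)]).
 assert (HyB : 2 < Rabs (mtr (ra1 rho))).
 { rewrite E1. apply hyp_msc; auto. apply hyp_of; auto. apply (not_q3q2 q I1 I2 I3 I4 I6 e5 e S5 Se Q5 Hrel). }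
 remember (oneparam (ra1 rho) t) as xi eqn:Hxi.
 assert (HX : SL2 xi) by (rewrite Hxi; apply op_det; auto).
 assert (Cm2 : mmul (minv xi) (q 2%nat) = mmul (q 2%nat) xi).
 { rewrite Hxi, op_form. apply L_comm_minv. rewrite E1. qnorm I1 I2 I3 I4 I6 idtac. apply msc_eq; ring. }
 assert (Cm3 : mmul (minv xi) (q 3%nat) = mmul (q 3%nat) xi).
 { rewrite Hxi, op_form. apply L_comm_minv. rewrite E1. qnorm I1 I2 I3 I4 I6 idtac. apply msc_eq; ring. }
 assert (R2 : forall X, mmul (minv xi) (mmul (q 2%nat) X) = mmul (q 2%nat) (mmul xi X))
   by (intro; rewrite <- massoc, Cm2, massoc; auto).
 assert (R3 : forall X, mmul (minv xi) (mmul (q 3%nat) X) = mmul (q 3%nat) (mmul xi X))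
   by (intro; rewrite <- massoc, Cm3, massoc; auto).
 assert (RX0 : mmul xi (minv xi) = mid) by (apply mul_minv1; auto).
 assert (RX : forall X, mmul xi (mmul (minv xi) X) = X) by (intro; rewrite <- massoc, RX0, mid_l; auto).
 pose (q2 := fun i => match i with 2%nat => mmul (q 2%nat) (minv xi) | 3%nat => mmul (q 3%nat) (minv xi) | _ => q i end).
 assert (Sq2 : mmul (q2 2%nat) (q2 2%nat) = mscale (-1) mid) by (simpl; qn I1 I2 I3 I4 I6 R2 R3 RX0 RX; reflexivity).
 assert (Sq3 : mmul (q2 3%nat) (q2 3%nat) = mscale (-1) mid) by (simpl; qn I1 I2 I3 I4 I6 R2 R3 RX0 RX; reflexivity).
 destruct HG as [G1 G2]. destruct HK as [K1 K2].
 apply close_inP5 with q2.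
 - split.
   + intros i Hi. destruct i as [|[|[|[|[|[|[|i]]]]]]]; try lia; try (apply G1; lia).
     * split. simpl; apply SL2_mul; [apply (proj1 I2)|apply SL2_minv; auto]. rewrite Sq2; apply (sgn_peq _ _ (-1)); sgns; reflexivity.
     * split. simpl; apply SL2_mul; [apply (proj1 I3)|apply SL2_minv; auto]. rewrite Sq3; apply (sgn_peq _ _ (-1)); sgns; reflexivity.
   + simpl. qn I1 I2 I3 I4 I6 R2 R3 RX0 RX. exact G2.
 - split. exact K1. intros i Hi Hn.
   destruct i as [|[|[|[|[|[|[|i]]]]]]]; try lia; try (apply K2; lia).
   + apply sq_notid; exact Sq2.
   + apply sq_notid; exact Sq3.
 - unfold close, flow_a1; simpl. rewrite <- Hxi. split; [|split; [|split]]; auto.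
   + apply (sgn_peq _ _ e1); auto. rewrite E1. qn I1 I2 I3 I4 I6 R2 R3 RX0 RX. reflexivity.
   + apply (sgn_peq _ _ e2); auto. rewrite E2. qn I1 I2 I3 I4 I6 R2 R3 RX0 RX. reflexivity.
Qed.


Lemma tr_sq P : SL2 P -> mtr (mmul P P) = mtr P * mtr P - 2.
Proof. destruct P; munf; intro H; nra. Qed.

Lemma flow_c1_ok q rho t : GammaRep q -> kernel_q5_only q -> close q rho -> inP5 (flow_c1 t rho).
Proof.
 intros HG HK HC. pose proof (facts q HG HK) as [I1 [I2 [I3 [I4 [I6 [SL5 [[e5 [S5 Q5]] [e [Se Hrel]]]]]]]]].
 destruct HC as [C1 [C2 [C3 C4]]].
 destruct (peq_sgn _ _ C1) as [e1 [S1 E1]]. destruct (peq_sgn _ _ C2) as [e2 [S2 E2]].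
 destruct (peq_sgn _ _ C3) as [e3 [S3 E3]]. destruct (peq_sgn _ _ C4) as [e4 [S4 E4]].
 destruct (W_rel q I1 I2 I3 I4 I6 e5 e S5 Se Q5 Hrel) as [k [Sk HW]].
 assert (HCW : Defs.comm (ra1 rho) (rb1 rho) = mscale (-1) (mmul (mmul (q 3%nat) (mmul (q 2%nat) (q 1%nat))) (mmul (q 3%nat) (mmul (q 2%nat) (q 1%nat))))).
 { unfold Defs.comm. rewrite E1, E2. qnorm I1 I2 I3 I4 I6 idtac. apply msc_eq. unfold sgn in S1, S2. transitivity ((e1*e1)*(e2*e2)*(-1)); [ring| rewrite S1, S2; ring]. }
 set (W := mmul (q 3%nat) (mmul (q 2%nat) (q 1%nat))) in *.
 assert (SW : SL2 W) by (unfold W; repeat apply SL2_mul; apply (proj1 I1) || apply (proj1 I2) || apply (proj1 I3)).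
 assert (SP : SL2 (mmul (q 4%nat) (q 6%nat))) by (apply SL2_mul; [apply (proj1 I4)|apply (proj1 I6)]).
 assert (HyP : 2 < Rabs (mtr (mmul (q 4%nat) (q 6%nat)))).
 { apply hyp_of; auto. apply (not_q4q6 q I1 I2 I3 I4 I6 e5 e S5 Se Q5 Hrel). }
 set (Cm := Defs.comm (ra1 rho) (rb1 rho)) in *.
 assert (HSC : SL2 Cm) by (rewrite HCW; apply SL2_msc; [sgns|apply SL2_mul; auto]).
 assert (HyC : 2 < Rabs (mtr Cm)).
 { rewrite HCW, HW, mtr_msc, msc_l, msc_r, msc_msc, mtr_msc, tr_sq by auto.
   unfold sgn in Sk. rewrite Rabs_mult, Rabs_mult.
   assert (Rabs (-1) = 1) by (rewrite Rabs_left; lra). rewrite H.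
   assert (Rabs (k*k) = 1) by (rewrite Sk; apply Rabs_R1). rewrite H0.
   set (tau := mtr (mmul (q 4%nat) (q 6%nat))) in *.
   assert (tau*tau > 4). { destruct (Rcase_abs tau); [rewrite Rabs_left in HyP|rewrite Rabs_right in HyP]; nra. }
   rewrite Rabs_right; lra. }
 assert (CW : mmul Cm W = mmul W Cm) by (rewrite HCW, msc_l, msc_r, !massoc; reflexivity).
 cbv zeta. unfold flow_c1. cbv zeta. fold Cm.
 remember (oneparam Cm t) as z eqn:Hz.
 assert (HZ : SL2 z) by (rewrite Hz; apply op_det; auto).
 assert (ZW : mmul z W = mmul W z) by (rewrite Hz, op_form; apply L_comm; auto).

 assert (RZ : mmul z (minv z) = mid) by (apply mul_minv1; auto).
 assert (Z0 : mmul (minv z) z = mid) by (apply minv_mul1; auto).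
 assert (Z1 : forall X, mmul (minv z) (mmul z X) = X) by (intro; rewrite <- massoc, Z0, mid_l; auto).
 assert (ZW' : forall Y, mmul z (mmul W Y) = mmul W (mmul z Y)) by (intro; rewrite <- massoc, ZW, massoc; auto).
 assert (HP : mmul (q 4%nat) (q 6%nat) = mscale k W) by (apply msc_swap; auto).
 pose (q2 := fun i => match i with 4%nat | 5%nat | 6%nat => cj z (q i) | _ => q i end).
 destruct HG as [G1 G2]. destruct HK as [K1 K2].
 apply close_inP5 with q2.
 - split.
   + intros i Hi. destruct i as [|[|[|[|[|[|[|i]]]]]]]; try lia; try (apply G1; lia).
     all: simpl; split; [apply cj_SL2; auto; apply G1; lia|rewrite <- cj_mul by auto; apply peq_cj_mid; auto; apply G1; lia].
   + simpl. unfold cj. qnorm I1 I2 I3 I4 I6 ltac:(rewrite ?Z0, ?Z1).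
     rewrite Q5. qnorm I1 I2 I3 I4 I6 idtac.
     rewrite <- (massoc (q 4%nat) (q 6%nat) (minv z)), HP, !msc_l, !msc_r, ZW', RZ, mid_r.
     unfold W. qnorm I1 I2 I3 I4 I6 idtac.
     apply (sgn_peq _ _ (e5 * k * -1 * -1 * -1)); [sgns|reflexivity].
 - split. simpl. apply peq_cj_mid; auto. intros i Hi Hn.
   destruct i as [|[|[|[|[|[|[|i]]]]]]]; try lia; try (apply K2; lia).
   all: simpl; apply notpeq_cj; auto; apply K2; lia.
 - unfold close; simpl. split; [|split; [|split]]; auto.
   + apply (sgn_peq _ _ e3); auto. rewrite E3. unfold cj. qnorm I1 I2 I3 I4 I6 ltac:(rewrite ?Z0, ?Z1). reflexivity.
   + apply (sgn_peq _ _ e4); auto. rewrite E4. unfold cj. qnorm I1 I2 I3 I4 I6 ltac:(rewrite ?Z0, ?Z1). reflexivity.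
Qed.

Theorem mainTheorem3 :
  forall (rho : SRep) (t : R),
    inP5 rho -> inP5 (flow_a1 t rho) /\ inP5 (flow_c1 t rho).
Proof.
 intros rho t H. destruct (inP5_close rho H) as [q [H1 [H2 H3]]].
 split; [eapply flow_a1_ok|eapply flow_c1_ok]; eauto.
Qed.
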